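(* Let $G(\lambda)\in\mathbb F(\lambda)^{p\times m}$ and let $L(\lambda)=\begin{bmatrix} A_1\lambda+A_0 & B_1\lambda+B_0\\ -(C_1\lambda+C_0) & D_1\lambda+D_0\end{bmatrix}$, with $A_1\lambda+A_0$ of size $n\times n$, be a linearization of $G(\lambda)$ with transfer function matrix $\widehat G(\lambda)=(D_1\lambda+D_0)+(C_1\lambda+C_0)(A_1\lambda+A_0)^{-1}(B_1\lambda+B_0)\in\mathbb F(\lambda)^{(p+s)\times(m+s)}$. Let $U(\lambda)\in\mathbb F[\lambda]^{(p+s)\times(p+s)}$ and $V(\lambda)\in\mathbb F[\lambda]^{(m+s)\times(m+s)}$ be unimodular with $U(\lambda)\widehat G(\lambda)V(\lambda)=\operatorname{Diag}(G(\lambda),I_s)$. (a) $\begin{bmatrix}H_1(\lambda)\\H_2(\lambda)\end{bmatrix}$ (with $H_1$ having $n$ rows) is a right polynomial basis of $L(\lambda)$ if and only if $H_2(\lambda)=V(\lambda)\begin{bmatrix}H(\lambda)\\0\end{bmatrix}$ for some right polynomial basis $H(\lambda)$ of $G(\lambda)$ and $H_1(\lambda)=-(A_1\lambda+A_0)^{-1}(B_1\lambda+B_0)H_2(\lambda)$. (b) $\begin{bmatrix}H_1(\lambda)\\H_2(\lambda)\end{bmatrix}$ is a left polynomial basis of $L(\lambda)$ if and only if $H_2(\lambda)=U(\lambda)^T\begin{bmatrix}H(\lambda)\\0\end{bmatrix}$ for some left polynomial basis $H(\lambda)$ of $G(\lambda)$ and $H_1(\lambda)=((C_1\lambda+C_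0)(A_1\lambda+A_0)^{-1})^TH_2(\lambda)$.
   Context: $\mathbb F$ is an arbitrary field. A polynomial system matrix $\begin{bmatrix} A(\lambda) & B(\lambda)\\ -C(\lambda) & D(\lambda)\end{bmatrix}$ ($A$ square regular) has transfer function $D+CA^{-1}B$; it is minimal if $A,B$ are left coprime and $A,C$ right coprime (coprime meaning all common one-sided divisors are unimodular). A pencil $L(\lambda)$ as in the claim is a linearization of $G(\lambda)$ if it is a minimal polynomial system matrix of a rational matrix $\widehat G(\lambda)$ such that $\operatorname{Diag}(\widehat G(\lambda))$ and $\operatorname{Diag}(G(\lambda),I_s)$ are unimodularly equivalent for some $s\ge 0$. A right (left) polynomial basis of a rational matrix $G$ is a polynomial matrix whose columns form a basis of $\mathcal N_r(G)=\{x:Gx=0\}$ ($\mathcal N_\ell(G)=\{x:x^TG=0\}$). *)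

(* Defs.v *)
From HB Require Import structures.
From mathcomp Require Import all_boot all_order all_algebra.
Set Implicit Arguments. Unset Strict Implicit. Unset Printing Implicit Defensive.
Import GRing.Theory.
Local Open Scope ring_scope.

Section Defs.
Variable F : fieldType.

Definition ratF := {fraction {poly F}}.

Definition pm2rm m n (P : 'M[{poly F}]_(m, n)) : 'M[ratF]_(m, n) :=
  map_mx (fun p => tofrac p) P.

Definition pencil m n (M1 M0 : 'M[F]_(m, n)) : 'M[{poly F}]_(m, n) :=
  \matrix_(i, j) ((M1 i j)%:P * 'X + (M0 i j)%:P).

Definition unimodular n (U : 'M[{poly F}]_n) : Prop := U \in unitmx.

Definition regular n (A : 'M[{poly F}]_n) : Prop := \det A != 0.

Definition left_coprime n k (A : 'M[{poly F}]_n) (B : 'M[{poly F}]_(n, k)) : Prop :=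
  forall (X A' : 'M[{poly F}]_n) (B' : 'M[{poly F}]_(n, k)),
    A = X *m A' -> B = X *m B' -> unimodular X.

Definition right_coprime n k (A : 'M[{poly F}]_n) (C : 'M[{poly F}]_(k, n)) : Prop :=
  forall (X A' : 'M[{poly F}]_n) (C' : 'M[{poly F}]_(k, n)),
    A = A' *m X -> C = C' *m X -> unimodular X.

Definition transfer n q r (A : 'M[{poly F}]_n) (B : 'M[{poly F}]_(n, r))
  (C : 'M[{poly F}]_(q, n)) (D : 'M[{poly F}]_(q, r)) : 'M[ratF]_(q, r) :=
  pm2rm D + pm2rm C *m invmx (pm2rm A) *m pm2rm B.

Definition minimal_psm n q r (A : 'M[{poly F}]_n) (B : 'M[{poly F}]_(n, r))
  (C : 'M[{poly F}]_(q, n)) (D : 'M[{poly F}]_(q, r)) : Prop :=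
  [/\ regular A, left_coprime A B & right_coprime A C].

Definition linearization n p m s
  (A : 'M[{poly F}]_n) (B : 'M[{poly F}]_(n, m + s))
  (C : 'M[{poly F}]_(p + s, n)) (D : 'M[{poly F}]_(p + s, m + s))
  (G : 'M[ratF]_(p, m)) : Prop :=
  minimal_psm A B C D /\
  exists (U : 'M[{poly F}]_(p + s)) (V : 'M[{poly F}]_(m + s)),
    [/\ unimodular U, unimodular V &
        pm2rm U *m transfer A B C D *m pm2rm V = block_mx G 0 0 1%:M].

(* H (polynomial, m x k) is a right polynomial basis of the rational p x m
   matrix G: its columns form a basis of N_r(G) over F(lambda). *)
Definition right_poly_basis p m k (G : 'M[ratF]_(p, m)) (H : 'M[{poly F}]_(m, k))
  : Prop :=
  [/\ G *m pm2rm H = 0,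
      row_free (pm2rm H)^T &
      forall x : 'cV[ratF]_m, G *m x = 0 -> (x^T <= (pm2rm H)^T)%MS].

(* H (polynomial, p x k) is a left polynomial basis of G: its columns form a
   basis of N_l(G) = {x : x^T G = 0}. *)
Definition left_poly_basis p m k (G : 'M[ratF]_(p, m)) (H : 'M[{poly F}]_(p, k))
  : Prop :=
  [/\ (pm2rm H)^T *m G = 0,
      row_free (pm2rm H)^T &
      forall x : 'cV[ratF]_p, x^T *m G = 0 -> (x^T <= (pm2rm H)^T)%MS].

End Defs.

(* Main.v *)
Require Import Defs.
From HB Require Import structures.
From mathcomp Require Import all_boot all_order all_algebra.
From Corelib Require Import Setoid.
Set Implicit Arguments. Unset Strict Implicit. Unset Printing Implicit Defensive.
Import GRing.Theory.
Local Open Scope ring_scope.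

Section Core.
Variable K : fieldType.

Definition RPB r c k (M : 'M[K]_(r,c)) (X : 'M[K]_(c,k)) : Prop :=
  [/\ M *m X = 0, row_free X^T &
      forall x : 'cV[K]_c, M *m x = 0 -> (x^T <= X^T)%MS].

Lemma cfreeP r c (X : 'M[K]_(r,c)) :
  row_free X^T <-> forall q (w : 'M[K]_(c,q)), X *m w = 0 -> w = 0.
Proof.
split.
- move=> fr q w Xw; apply: trmx_inj; apply/eqP.
  by rewrite trmx0 -(mulmx_free_eq0 _ fr) -trmx_mul Xw trmx0.
- move=> H; rewrite -kermx_eq0; apply/eqP; apply: trmx_inj; rewrite trmx0.
  apply: H; by rewrite -[X in X *m _]trmxK -trmx_mul mulmx_ker trmx0.
Qed.

Lemma spanP r c (x : 'M[K]_(r,1)) (X : 'M[K]_(r,c)) :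
  (x^T <= X^T)%MS <-> exists w : 'M[K]_(c,1), x = X *m w.
Proof.
split.
- case/submxP=> D e; exists D^T; by rewrite -[x]trmxK e trmx_mul trmxK.
- case=> w ->; by rewrite trmx_mul submxMl.
Qed.

Lemma col_mx_eq0 m1 m2 q (y : 'M[K]_(m1,q)) (z : 'M[K]_(m2,q)) :
  col_mx y z = 0 <-> y = 0 /\ z = 0.
Proof.
split; last by case=> -> ->; rewrite col_mx0.
by rewrite -col_mx0 => /eq_col_mx.
Qed.

Lemma unit_mul_eq0 n q (u : 'M[K]_n) (Y : 'M[K]_(n,q)) :
  u \in unitmx -> (u *m Y = 0 <-> Y = 0).
Proof.
move=> hu; split=> [h|->]; last by rewrite mulmx0.
by rewrite -(mulKmx hu Y) h mulmx0.
Qed.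

Variables (n p m s : nat).
Variables (a : 'M[K]_n) (b : 'M[K]_(n, m + s)) (c : 'M[K]_(p + s, n))
  (d : 'M[K]_(p + s, m + s)) (G : 'M[K]_(p, m)) (u : 'M[K]_(p + s))
  (v : 'M[K]_(m + s)).
Hypotheses (ha : a \in unitmx) (hu : u \in unitmx) (hv : v \in unitmx).
Let g := d + c *m invmx a *m b.
Let P := - (invmx a *m b).
Hypothesis huv : u *m g *m v = block_mx G 0 0 1%:M.

Lemma nullL q (x1 : 'M[K]_(n,q)) x2 :
  block_mx a b (-c) d *m col_mx x1 x2 = 0 <-> x1 = P *m x2 /\ g *m x2 = 0.
Proof.
rewrite mul_block_col col_mx_eq0; split.
- case=> e1 e2.
  have ex1 : x1 = P *m x2.
    rewrite -(mulKmx ha x1) /P mulNmx -mulmxA -mulmxN; congr (_ *m _).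
    by rewrite -[a *m x1](addrK (b *m x2)) e1 add0r.
  split=> //; rewrite -e2 ex1 /g /P mulmxDl !mulNmx mulmxN opprK !mulmxA.
  by rewrite addrC.
- case=> -> e2; split.
    by rewrite /P mulmxA mulmxN mulmxA mulmxV // mul1mx mulNmx addNr.
  rewrite -e2 /g /P mulmxDl !mulNmx mulmxN opprK !mulmxA addrC.
  done.
Qed.

Lemma Mcol q (y : 'M[K]_(m,q)) (z : 'M[K]_(s,q)) :
  block_mx G 0 0 1%:M *m col_mx y z = col_mx (G *m y) z.
Proof. by rewrite mul_block_col !mul0mx mul1mx addr0 add0r. Qed.

Lemma gz q (z : 'M[K]_(m+s,q)) :
  g *m (v *m z) = 0 <-> block_mx G 0 0 1%:M *m z = 0.
Proof. by rewrite -huv -!mulmxA (unit_mul_eq0 _ hu). Qed.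

Lemma core k (h1 : 'M[K]_(n,k)) (h2 : 'M[K]_(m+s,k)) :
  RPB (block_mx a b (-c) d) (col_mx h1 h2) <->
  (exists h : 'M[K]_(m,k), RPB G h /\ h2 = v *m col_mx h 0) /\
  h1 = - (invmx a *m b) *m h2.
Proof.
split.
- case=> LH0 fr sp.
  have [h1e gh] := proj1 (nullL h1 h2) LH0.
  set z := invmx v *m h2.
  have h2z : h2 = v *m z by rewrite /z mulKVmx.
  have : g *m (v *m z) = 0 by rewrite -h2z.
  rewrite gz -[z]vsubmxK Mcol col_mx_eq0 => -[Gh dz].
  split=> //; exists (usubmx z).
  have h2e : h2 = v *m col_mx (usubmx z) 0 by rewrite -dz vsubmxK.
  split=> //; split=> //.
  + apply/cfreeP=> q w hw; move/cfreeP: fr; apply.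
    rewrite mul_col_mx h1e h2e -!mulmxA mul_col_mx hw mul0mx col_mx0 !mulmx0.
    by rewrite col_mx0.
  + move=> y Gy; apply/spanP.
    set x2 := v *m col_mx y 0.
    have : block_mx a b (-c) d *m col_mx (P *m x2) x2 = 0.
      apply/nullL; split=> //; rewrite /x2 gz Mcol Gy col_mx0 //.
    move/sp/spanP=> [w]; rewrite mul_col_mx => /eq_col_mx [_].
    rewrite /x2 h2e -mulmxA => /(congr1 (mulmx (invmx v))); rewrite !mulKmx //.
    by rewrite mul_col_mx => /eq_col_mx [-> _]; exists w.
- case=> [[h [[Gh0 frh sph] h2e]] h1e]; split.
  + apply/nullL; split=> //; by rewrite h2e gz Mcol Gh0 col_mx0.
  + apply/cfreeP=> q w; rewrite mul_col_mx col_mx_eq0 => -[_].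
    rewrite h2e -mulmxA (unit_mul_eq0 _ hv) mul_col_mx mul0mx col_mx_eq0.
    by case=> /(cfreeP _).1 H _; apply: (H frh).
  + move=> x; rewrite -[x]vsubmxK; set x1 := usubmx x; set x2 := dsubmx x.
    case/nullL=> x1e gx2; set z := invmx v *m x2.
    have x2z : x2 = v *m z by rewrite /z mulKVmx.
    have : g *m (v *m z) = 0 by rewrite -x2z.
    rewrite gz -[z]vsubmxK Mcol col_mx_eq0 => -[Gz dz].
    have [w uz] := (spanP _ _).1 (sph _ Gz).
    apply/spanP; exists w.
    have x2e : x2 = h2 *m w.
      by rewrite x2z -[z]vsubmxK uz dz h2e -mulmxA mul_col_mx mul0mx.
    by rewrite mul_col_mx h1e x1e x2e mulmxA.
Qed.

End Core.

Section Poly.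
Variable F : fieldType.
Local Notation K := (ratF F).

Lemma pm2rmE r c (P : 'M[{poly F}]_(r,c)) : pm2rm P = map_mx (@tofrac _) P.
Proof. by []. Qed.

Lemma pm2rmM r c q (P : 'M[{poly F}]_(r,c)) (Q : 'M[{poly F}]_(c,q)) :
  pm2rm (P *m Q) = pm2rm P *m pm2rm Q.
Proof. by rewrite !pm2rmE map_mxM. Qed.
Lemma pm2rm_col r1 r2 c (P : 'M[{poly F}]_(r1,c)) (Q : 'M[{poly F}]_(r2,c)) :
  pm2rm (col_mx P Q) = col_mx (pm2rm P) (pm2rm Q).
Proof. by rewrite !pm2rmE map_col_mx. Qed.
Lemma pm2rm_usub r1 r2 c (P : 'M[{poly F}]_(r1 + r2,c)) :
  pm2rm (usubmx P) = usubmx (pm2rm P).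
Proof. by rewrite !pm2rmE map_usubmx. Qed.
Lemma pm2rm0 r c : pm2rm (0 : 'M[{poly F}]_(r,c)) = 0.
Proof. by rewrite !pm2rmE map_mx0. Qed.
Lemma pm2rm1 r : pm2rm (1%:M : 'M[{poly F}]_r) = 1%:M.
Proof. by rewrite !pm2rmE map_mx1. Qed.
Lemma pm2rmN r c (P : 'M[{poly F}]_(r,c)) : pm2rm (- P) = - pm2rm P.
Proof. by rewrite !pm2rmE map_mxN. Qed.
Lemma pm2rm_tr r c (P : 'M[{poly F}]_(r,c)) : pm2rm P^T = (pm2rm P)^T.
Proof. by rewrite !pm2rmE map_trmx. Qed.
Lemma pm2rm_block r1 r2 c1 c2 (P1 : 'M[{poly F}]_(r1,c1)) (P2 : 'M[{poly F}]_(r1,c2))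
  (P3 : 'M[{poly F}]_(r2,c1)) (P4 : 'M[{poly F}]_(r2,c2)) :
  pm2rm (block_mx P1 P2 P3 P4) = block_mx (pm2rm P1) (pm2rm P2) (pm2rm P3) (pm2rm P4).
Proof. by rewrite !pm2rmE map_block_mx. Qed.

Lemma pm2rm_inj r c : injective (@pm2rm F r c).
Proof.
move=> P Q e; apply/matrixP=> i j; move/matrixP: e => /(_ i j).
by rewrite !mxE => /eqP; rewrite tofrac_eq => /eqP.
Qed.

Lemma pm2rm_unit r (U : 'M[{poly F}]_r) : U \in unitmx -> pm2rm U \in unitmx.
Proof. by rewrite pm2rmE !unitmxE det_map_mx; apply: rmorph_unit. Qed.

Lemma pm2rm_reg r (A : 'M[{poly F}]_r) : regular A -> pm2rm A \in unitmx.
Proof.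
by rewrite /regular pm2rmE unitmxE det_map_mx unitfE tofrac_eq0.
Qed.

Lemma exconv r q s k (G : 'M[K]_(r, q)) (V : 'M[{poly F}]_(q + s))
  (H2 : 'M[{poly F}]_(q + s, k)) : V \in unitmx ->
  (exists h : 'M[K]_(q,k), RPB G h /\ pm2rm H2 = pm2rm V *m col_mx h 0) <->
  (exists H : 'M[{poly F}]_(q,k), RPB G (pm2rm H) /\ H2 = V *m col_mx H 0).
Proof.
move=> hV; split.
- case=> h [Rh e]; exists (usubmx (invmx V *m H2)).
  have ez : pm2rm (invmx V *m H2) = col_mx h 0.
    by rewrite pm2rmM e mulmxA -pm2rmM mulVmx // pm2rm1 mul1mx.
  have eu : pm2rm (usubmx (invmx V *m H2)) = h.
    by rewrite pm2rm_usub ez col_mxKu.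
  split; first by rewrite eu.
  by apply: pm2rm_inj; rewrite e pm2rmM pm2rm_col pm2rm0 eu.
- case=> H [RH e]; exists (pm2rm H); split=> //.
  by rewrite e pm2rmM pm2rm_col pm2rm0.
Qed.

Lemma trN r c (X : 'M[K]_(r,c)) : (- X)^T = - X^T.
Proof. by apply/matrixP=> i j; rewrite !mxE. Qed.
Lemma trD r c (X Y : 'M[K]_(r,c)) : (X + Y)^T = X^T + Y^T.
Proof. by apply/matrixP=> i j; rewrite !mxE. Qed.

Lemma lpbE r c k (M : 'M[K]_(r,c)) (H : 'M[{poly F}]_(r,k)) :
  left_poly_basis M H <-> RPB M^T (pm2rm H).
Proof.
have e : forall q (Y : 'M[K]_(r,q)), Y^T *m M = 0 <-> M^T *m Y = 0.
  move=> q Y; split=> h.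
  - by rewrite -[M^T *m Y]trmxK trmx_mul trmxK h trmx0.
  - by rewrite -[Y^T *m M]trmxK trmx_mul [Y^T^T]trmxK h trmx0.
rewrite /left_poly_basis /RPB; split; case=> h1 h2 h3; split=> //.
- by apply/e.
- by move=> x /e; apply: h3.
- by apply/e.
- by move=> x /e; apply: h3.
Qed.

End Poly.

Theorem theorem4p3 (F : fieldType) (n p m s : nat)
  (A1 A0 : 'M[F]_n) (B1 B0 : 'M[F]_(n, m + s))
  (C1 C0 : 'M[F]_(p + s, n)) (D1 D0 : 'M[F]_(p + s, m + s))
  (G : 'M[ratF F]_(p, m))
  (U : 'M[{poly F}]_(p + s)) (V : 'M[{poly F}]_(m + s)) :
  let A := pencil A1 A0 in
  let B := pencil B1 B0 in
  let C := pencil C1 C0 in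
  let D := pencil D1 D0 in
  let L : 'M[{poly F}]_(n + (p + s), n + (m + s)) := block_mx A B (- C) D in
  let Ghat := transfer A B C D in
  linearization A B C D G ->
  unimodular U -> unimodular V ->
  pm2rm U *m Ghat *m pm2rm V = block_mx G 0 0 1%:M ->
  (forall (k : nat) (H1 : 'M[{poly F}]_(n, k)) (H2 : 'M[{poly F}]_(m + s, k)),
     right_poly_basis (pm2rm L) (col_mx H1 H2) <->
     (exists H : 'M[{poly F}]_(m, k),
        right_poly_basis G H /\ H2 = V *m col_mx H 0) /\
     pm2rm H1 = - (invmx (pm2rm A) *m pm2rm B) *m pm2rm H2) /\
  (forall (k : nat) (H1 : 'M[{poly F}]_(n, k)) (H2 : 'M[{poly F}]_(p + s, k)),
     left_poly_basis (pm2rm L) (col_mx H1 H2) <->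
     (exists H : 'M[{poly F}]_(p, k),
        left_poly_basis G H /\ H2 = U^T *m col_mx H 0) /\
     pm2rm H1 = (pm2rm C *m invmx (pm2rm A))^T *m pm2rm H2).
Proof.
move=> A B C D L Ghat [[regA _ _] _] hU hV huv.
have ha := pm2rm_reg regA; have hu := pm2rm_unit hU; have hv := pm2rm_unit hV.
have pmL : pm2rm L = block_mx (pm2rm A) (pm2rm B) (- pm2rm C) (pm2rm D).
  by rewrite /L pm2rm_block pm2rmN.
split=> k H1 H2.
- have -> : right_poly_basis (pm2rm L) (col_mx H1 H2) <->
     RPB (block_mx (pm2rm A) (pm2rm B) (- pm2rm C) (pm2rm D))
         (col_mx (pm2rm H1) (pm2rm H2)).
    by rewrite /right_poly_basis /RPB pmL pm2rm_col.
  rewrite (core ha hu hv huv).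
  apply: and_iff_compat_r; exact: exconv.
- rewrite lpbE pm2rm_col pmL tr_block_mx trN -[(pm2rm B)^T]opprK.
  have ha' : (pm2rm A)^T \in unitmx by rewrite unitmx_tr; exact: ha.
  have hu' : (pm2rm V)^T \in unitmx by rewrite unitmx_tr; exact: hv.
  have hv' : (pm2rm U)^T \in unitmx by rewrite unitmx_tr; exact: hu.
  have huv' : (pm2rm V)^T *m ((pm2rm D)^T + (- (pm2rm B)^T) *m
      invmx (pm2rm A)^T *m (- (pm2rm C)^T)) *m (pm2rm U)^T = block_mx G^T 0 0 1%:M.
    have := congr1 trmx huv; rewrite !trmx_mul tr_block_mx !trmx0 trmx1 => <-.
    rewrite mulmxA; congr (_ *m _ *m _).
    rewrite /Ghat /transfer trD !trmx_mul trmx_inv.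
    by rewrite mulmxN !mulNmx opprK mulmxA.
  rewrite (core ha' hu' hv' huv').
  have e1 : - (invmx (pm2rm A)^T *m - (pm2rm C)^T) = (pm2rm C *m invmx (pm2rm A))^T.
    by rewrite mulmxN opprK trmx_mul trmx_inv.
  rewrite e1; apply: and_iff_compat_r.
  have hUt : U^T \in unitmx by rewrite unitmx_tr; exact: hU.
  rewrite -pm2rm_tr (exconv G^T H2 hUt).
  split; case=> H [RH e]; exists H; split=> //; by apply/lpbE.
Qed.
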